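(* Let $X$ be a complete CAT(0) space and $T_n:X\to X$ for $n\in\mathbb{N}$, with $F:=\bigcap_{n\in\mathbb{N}}Fix(T_n)\neq\emptyset$. Let $\varphi:[0,\infty)\to[0,\infty)$ be an increasing function vanishing only at $0$, and $(\gamma_n)$ a sequence in $(0,\infty)$ with $\sum_{n=0}^\infty\gamma_n^2=\infty$ having rate of divergence $\theta$. Let $b\in\mathbb{N}$, $p\in F$, and $C$ the closed ball of center $p$ and radius $b$. Assume that for all $n$, $T_n$ is uniformly $(P_2)$ on $C$ with modulus $\gamma_n\varphi$. For $x\in C$ let $x_0:=x$, $x_{n+1}:=T_nx_n$, and suppose the sequence $\left(\frac{d(x_n,x_{n+1})}{\gamma_n}\right)$ is nonincreasing. Then $C\cap F=\{p\}$ and $(x_n)$ converges strongly to $p$ with rate of convergence $$\Psi_{b,\theta,\varphi}(k):=\Sigma_{b,\theta}\left(\left\lceil\frac{2b}{\varphi\left(\frac1{k+1}\right)}\right\rceil\right)+1,\qquad \Sigma_{b,\theta}(k):=\theta(b^2(k+1)^2).$$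
   Context: A geodesic space $(X,d)$ is CAT(0) if for all $z\in X$, all geodesics $\gamma:[a,b]\to X$ and all $t\in[0,1]$, $d^2(z,\gamma((1-t)a+tb))\le(1-t)d^2(z,\gamma(a))+td^2(z,\gamma(b))-t(1-t)d^2(\gamma(a),\gamma(b))$. $T$ is uniformly $(P_2)$ on $C$ with modulus $\phi$ if $T(C)\subseteq C$ and for all $x,y\in C$: $2d^2(Tx,Ty)\le d^2(x,Ty)+d^2(y,Tx)-d^2(x,Tx)-d^2(y,Ty)-2\phi(d(Tx,Ty))$. A rate of divergence for $\sum\gamma_n^2=\infty$ is $\theta:\mathbb{N}\to\mathbb{N}$ with $\sum_{n=0}^{\theta(K)}\gamma_n^2\ge K$ for all $K\in\mathbb{N}$. A rate of convergence of $a_n\to a$ is $\Phi:\mathbb{N}\to\mathbb{N}$ with $d(a_n,a)\le\frac1{k+1}$ for all $k$ and all $n\ge\Phi(k)$. $Fix(T)$ is the fixed point set. *)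

(* Defs.v *)
From Stdlib Require Export Reals Lra ZArith.
Open Scope R_scope.

Section MetricDefs.
Variable X : Type.
Variable d : X -> X -> R.

Definition is_metric : Prop :=
  (forall x y, 0 <= d x y) /\
  (forall x y, d x y = 0 <-> x = y) /\
  (forall x y, d x y = d y x) /\
  (forall x y z, d x z <= d x y + d y z).

Definition is_geodesic (g : R -> X) (a b : R) : Prop :=
  a <= b /\
  forall s t, a <= s <= b -> a <= t <= b -> d (g s) (g t) = Rabs (s - t).

Definition geodesic_space : Prop :=
  forall x y, exists g : R -> X,
    is_geodesic g 0 (d x y) /\ g 0 = x /\ g (d x y) = y.

Definition CAT0 : Prop :=
  is_metric /\ geodesic_space /\
  forall (z : X) (g : R -> X) (a b : R), is_geodesic g a b ->
  forall t, 0 <= t <= 1 ->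
    (d z (g ((1 - t) * a + t * b))) ^ 2 <=
      (1 - t) * (d z (g a)) ^ 2 + t * (d z (g b)) ^ 2
      - t * (1 - t) * (d (g a) (g b)) ^ 2.

Definition cauchy_seq (u : nat -> X) : Prop :=
  forall eps, 0 < eps -> exists N, forall m n, (N <= m)%nat -> (N <= n)%nat ->
    d (u m) (u n) < eps.

Definition seq_converges_to (u : nat -> X) (l : X) : Prop :=
  forall eps, 0 < eps -> exists N, forall n, (N <= n)%nat -> d (u n) l < eps.

Definition complete : Prop :=
  forall u, cauchy_seq u -> exists l, seq_converges_to u l.

Definition uniformly_P2 (T : X -> X) (C : X -> Prop) (phi : R -> R) : Prop :=
  (forall x, C x -> C (T x)) /\
  forall x y, C x -> C y ->
    2 * (d (T x) (T y)) ^ 2 <=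
      (d x (T y)) ^ 2 + (d y (T x)) ^ 2 - (d x (T x)) ^ 2 - (d y (T y)) ^ 2
      - 2 * phi (d (T x) (T y)).

Definition closed_ball (p : X) (r : R) : X -> Prop := fun y => d p y <= r.

Definition rate_of_convergence (u : nat -> X) (a : X) (Phi : nat -> nat) : Prop :=
  forall k n, (Phi k <= n)%nat -> d (u n) a <= 1 / (INR k + 1).
End MetricDefs.

Fixpoint iter_seq {X : Type} (T : nat -> X -> X) (x : X) (n : nat) : X :=
  match n with
  | O => x
  | S m => T m (iter_seq T x m)
  end.

Definition rate_of_divergence (gamma : nat -> R) (theta : nat -> nat) : Prop :=
  forall K : nat, sum_f_R0 (fun n => (gamma n) ^ 2) (theta K) >= INR K.

(* ceiling of a real number, as a natural number (for nonnegative arguments) *)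
Definition nat_ceil (x : R) : nat := Z.to_nat (- (up (- x) - 1))%Z.

Definition Sigma_rate (b : nat) (theta : nat -> nat) (k : nat) : nat :=
  theta (Nat.mul (Nat.pow b 2) (Nat.pow (S k) 2)).

Definition Psi_rate (b : nat) (theta : nat -> nat) (phi : R -> R) (k : nat) : nat :=
  S (Sigma_rate b theta (nat_ceil (2 * INR b / phi (1 / (INR k + 1))))).

(* Main.v *)
Require Import Defs.
From Stdlib Require Import Reals Lra Lia ZArith.
Open Scope R_scope.

Lemma nat_ceil_ge (x : R) : x <= INR (nat_ceil x).
Proof.
  unfold nat_ceil.
  destruct (archimed (- x)) as [H1 H2].
  set (z := (- (up (- x) - 1))%Z).
  assert (Hz : x <= IZR z).
  { unfold z. rewrite opp_IZR, minus_IZR. simpl. lra. }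
  destruct (Z_lt_le_dec z 0) as [Hn|Hp].
  - replace (Z.to_nat z) with 0%nat by (clearbody z; destruct z; simpl; lia). simpl.
    apply IZR_lt in Hn. lra.
  - rewrite INR_IZR_INZ, Z2Nat.id by lia. exact Hz.
Qed.

Theorem theorem5p1
  (X : Type) (d : X -> X -> R)
  (HCAT : CAT0 X d) (Hcomplete : complete X d)
  (T : nat -> X -> X)
  (phi : R -> R)
  (Hphi_nonneg : forall t, 0 <= t -> 0 <= phi t)
  (Hphi_incr : forall s t, 0 <= s -> s <= t -> phi s <= phi t)
  (Hphi_zero : forall t, 0 <= t -> (phi t = 0 <-> t = 0))
  (gamma : nat -> R) (Hgamma_pos : forall n, 0 < gamma n)
  (theta : nat -> nat) (Htheta : rate_of_divergence gamma theta)
  (b : nat) (p : X) (HpF : forall n, T n p = p)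
  (HP2 : forall n, uniformly_P2 X d (T n) (closed_ball X d p (INR b))
                     (fun u => gamma n * phi u))
  (x : X) (HxC : closed_ball X d p (INR b) x)
  (Hnoninc : forall n,
     d (iter_seq T x (S n)) (iter_seq T x (S (S n))) / gamma (S n) <=
     d (iter_seq T x n) (iter_seq T x (S n)) / gamma n) :
  (forall y, closed_ball X d p (INR b) y -> ((forall n, T n y = y) <-> y = p)) /\
  seq_converges_to X d (iter_seq T x) p /\
  rate_of_convergence X d (iter_seq T x) p (Psi_rate b theta phi).
Proof.
  destruct HCAT as [[Hd0 [Hdeq [Hsym Htri]]] _].
  assert (Hpp : d p p = 0) by (apply Hdeq; reflexivity).
  set (xs := iter_seq T x).
  assert (HxsS : forall n, xs (S n) = T n (xs n)) by reflexivity.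
  assert (HC : forall n, closed_ball X d p (INR b) (xs n)).
  { induction n; [exact HxC|]. rewrite HxsS. apply (proj1 (HP2 n)). exact IHn. }
  set (a := fun n => d (xs n) p).
  set (D := fun n => d (xs n) (xs (S n))).
  assert (Ha0 : forall n, 0 <= a n) by (intro; apply Hd0).
  assert (HD0 : forall n, 0 <= D n) by (intro; apply Hd0).
  assert (Hab : forall n, a n <= INR b).
  { intro n. unfold a. rewrite Hsym. apply HC. }
  assert (Hkey : forall n,
    a (S n) ^ 2 <= a n ^ 2 - D n ^ 2 - 2 * (gamma n * phi (a (S n)))).
  { intro n. destruct (HP2 n) as [_ H].
    specialize (H (xs n) p (HC n)).
    assert (Cp : closed_ball X d p (INR b) p).
    { unfold closed_ball. rewrite Hpp. apply pos_INR. }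
    specialize (H Cp). rewrite HpF in H. rewrite Hpp in H.
    unfold a, D. rewrite HxsS. rewrite (Hsym p (T n (xs n))) in H. lra. }
  assert (Hphia : forall n, 0 <= phi (a n)) by (intro; apply Hphi_nonneg; auto).
  assert (Hdec : forall n, a (S n) <= a n).
  { intro n. specialize (Hkey n).
    assert (0 <= gamma n * phi (a (S n))).
    { apply Rmult_le_pos; [apply Rlt_le; auto | auto]. }
    assert (a (S n) ^ 2 <= a n ^ 2) by nra.
    generalize (Ha0 n) (Ha0 (S n)); nra. }
  assert (Hmono : forall n m, (n <= m)%nat -> a m <= a n).
  { intros n m Hnm. induction Hnm; [lra|]. specialize (Hdec m). lra. }
  set (c := fun n => D n / gamma n).
  assert (HDc : forall n, D n = c n * gamma n).
  { intro n. unfold c. field. apply Rgt_not_eq, Hgamma_pos. }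
  assert (Hc0 : forall n, 0 <= c n).
  { intro n. unfold c. apply Rmult_le_pos; auto.
    apply Rlt_le, Rinv_0_lt_compat; auto. }
  assert (Hphic : forall n, phi (a (S n)) <= INR b * c n).
  { intro n. specialize (Hkey n).
    assert (Htr : a n <= D n + a (S n)).
    { unfold a, D. apply Htri. }
    assert (2 * (gamma n * phi (a (S n))) <= (a n - a (S n)) * (a n + a (S n))) by nra.
    assert ((a n - a (S n)) * (a n + a (S n)) <= D n * (2 * INR b)).
    { apply Rmult_le_compat.
      - specialize (Hdec n); lra.
      - generalize (Ha0 n) (Ha0 (S n)); lra.
      - lra.
      - generalize (Hab n) (Hab (S n)); lra. }
    rewrite HDc in H0.
    assert (Hg := Hgamma_pos n).
    assert (gamma n * phi (a (S n)) <= gamma n * (INR b * c n)) by nra.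
    apply Rmult_le_reg_l in H1; auto. }
  assert (Hcmono : forall j N, (j <= N)%nat -> c N <= c j).
  { intros j N H. induction H; [lra|].
    specialize (Hnoninc m). fold xs in Hnoninc.
    change (c (S m) <= c m) in Hnoninc. lra. }
  assert (Hsum : forall N, sum_f_R0 (fun j => D j ^ 2) N <= a 0%nat ^ 2 - a (S N) ^ 2).
  { induction N.
    - simpl sum_f_R0. specialize (Hkey 0%nat).
      assert (0 <= gamma 0%nat * phi (a 1%nat)).
      { apply Rmult_le_pos; [apply Rlt_le; auto | auto]. }
      lra.
    - change (sum_f_R0 (fun j => D j ^ 2) (S N)) with (sum_f_R0 (fun j => D j ^ 2) N + D (S N) ^ 2). specialize (Hkey (S N)).
      assert (0 <= gamma (S N) * phi (a (S (S N)))).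
      { apply Rmult_le_pos; [apply Rlt_le; auto | auto]. }
      lra. }
  assert (Hcsum : forall N, c N ^ 2 * sum_f_R0 (fun j => gamma j ^ 2) N <= INR b ^ 2).
  { intro N.
    assert (H1 : sum_f_R0 (fun j => gamma j ^ 2 * c N ^ 2) N <= sum_f_R0 (fun j => D j ^ 2) N).
    { apply sum_Rle. intros j Hj. rewrite HDc.
      assert (Hcj := Hcmono j N Hj). assert (HcN := Hc0 N).
      assert (c N ^ 2 <= c j ^ 2) by (apply pow_incr; lra).
      assert (0 <= gamma j ^ 2) by (apply pow2_ge_0).
      rewrite Rpow_mult_distr. nra. }
    rewrite <- scal_sum in H1.
    specialize (Hsum N).
    assert (a 0%nat ^ 2 <= INR b ^ 2) by (apply pow_incr; split; auto).
    assert (0 <= a (S N) ^ 2) by apply pow2_ge_0.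
    lra. }
  assert (Hrate : rate_of_convergence X d xs p (Psi_rate b theta phi)).
  { intros k n Hn.
    fold (a n).
    assert (Hk : 0 < 1 / (INR k + 1)).
    { apply Rdiv_lt_0_compat; [lra|]. generalize (pos_INR k); lra. }
    destruct (Nat.eq_dec b 0) as [Hb0|Hbpos].
    { specialize (Hab n). rewrite Hb0 in Hab. simpl in Hab. lra. }
    assert (Hb : 0 < INR b) by (apply lt_0_INR; lia).
    set (eps := phi (1 / (INR k + 1))).
    assert (Heps : 0 < eps).
    { assert (0 <= eps) by (apply Hphi_nonneg; lra).
      destruct (Req_dec eps 0) as [He|He]; [|lra].
      apply (Hphi_zero _ (Rlt_le _ _ Hk)) in He. lra. }
    set (M := nat_ceil (2 * INR b / eps)).
    assert (HM : 2 * INR b / eps <= INR M) by apply nat_ceil_ge.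
    assert (HM' : 2 * INR b <= eps * INR M).
    { unfold Rdiv in HM. apply (Rmult_le_compat_l eps) in HM; [|lra].
      rewrite <- Rmult_assoc, (Rmult_comm eps), Rmult_assoc, Rinv_r in HM; lra. }
    set (N := theta (Nat.mul (Nat.pow b 2) (Nat.pow (S M) 2))).
    assert (HnN : (S N <= n)%nat) by exact Hn.
    assert (HK := Htheta (Nat.mul (Nat.pow b 2) (Nat.pow (S M) 2))).
    fold N in HK.
    rewrite mult_INR, !pow_INR, S_INR in HK.
    assert (HcN := Hcsum N).
    assert (Hc := Hc0 N).
    assert (HcM : c N ^ 2 * (INR M + 1) ^ 2 <= 1).
    { assert (0 <= c N ^ 2) by apply pow2_ge_0.
      assert (c N ^ 2 * (INR b ^ 2 * (INR M + 1) ^ 2) <= INR b ^ 2).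
      { eapply Rle_trans; [|exact HcN]. apply Rmult_le_compat_l; lra. }
      assert (0 < INR b ^ 2) by (apply pow_lt; auto).
      nra. }
    assert (HcM1 : c N * (INR M + 1) <= 1).
    { assert (0 <= INR M) by apply pos_INR. nra. }
    assert (HpA := Hphic N).
    assert (HA : a (S N) < 1 / (INR k + 1)).
    { destruct (Rlt_le_dec (a (S N)) (1 / (INR k + 1))) as [|Hge]; [auto|].
      exfalso.
      assert (eps <= phi (a (S N))) by (apply Hphi_incr; lra).
      assert (0 <= INR M) by apply pos_INR.
      assert (eps * (INR M + 1) <= INR b * c N * (INR M + 1)) by nra.
      nra. }
    specialize (Hmono _ _ HnN). lra. }
  split; [|split; [|exact Hrate]].
  - intros y Hy. split.
    + intro Hfix. destruct (HP2 0%nat) as [_ H].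
      assert (Cp : closed_ball X d p (INR b) p).
      { unfold closed_ball. rewrite Hpp. apply pos_INR. }
      specialize (H y p Hy Cp). rewrite Hfix, HpF, Hpp in H.
      rewrite (Hsym p y) in H.
      assert (Hg := Hgamma_pos 0%nat).
      assert (H0 := Hphi_nonneg (d y p) (Hd0 y p)).
      assert (phi (d y p) = 0) by nra.
      apply Hdeq. apply (Hphi_zero _ (Hd0 y p)). auto.
    + intros ->. auto.
  - intros eps Heps.
    destruct (archimed (/ eps)) as [H1 _].
    assert (Hup : (0 < up (/ eps))%Z).
    { apply lt_IZR. assert (0 < / eps) by (apply Rinv_0_lt_compat; auto). lra. }
    exists (Psi_rate b theta phi (Z.to_nat (up (/ eps)))).
    intros n Hn. specialize (Hrate _ n Hn).
    eapply Rle_lt_trans; [exact Hrate|].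
    rewrite INR_IZR_INZ, Z2Nat.id by lia.
    assert (Hi : 0 < / eps) by (apply Rinv_0_lt_compat; auto).
    assert (Hz : / eps < IZR (up (/ eps)) + 1) by lra.
    apply Rinv_lt_contravar in Hz.
    + rewrite Rinv_inv in Hz. unfold Rdiv. rewrite Rmult_1_l. exact Hz.
    + apply Rmult_lt_0_compat; lra.
Qed.
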